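(* Let $X$ be a finite $T_0$-space with more than one point. If $x\in X$ is a maximum or a minimum of $X$, then $p_X(\lambda)=-\lambda\, p_{X\setminus\{x\}}(\lambda)$, where $p_Y(\lambda)=\det(Y_M-\lambda I)$.
   Context: A finite $T_0$-space is identified with a finite poset via $x\le y$ iff $U_x\subseteq U_y$, where $U_x$ is the minimal open set containing $x$; subsets carry the induced order. For a labelling $Y=\{y_1,\dots,y_m\}$, $Y_M=(y_{i,j})$ is the $m\times m$ matrix with $y_{i,j}=0$ if $y_i\le y_j$ and $y_{i,j}=1$ otherwise. *)

(* Defs.v *)
From mathcomp Require Import all_boot all_order all_algebra.
Set Implicit Arguments. Unset Strict Implicit. Unset Printing Implicit Defensive.
Import GRing.Theory.
Local Open Scope ring_scope.

Section FiniteSpaces.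
Variable T : finType.

(* A topology on the finite carrier T, given by its family of open sets.
   Since T is finite, closure under binary unions gives closure under
   arbitrary unions. *)
Definition is_topology (O : {set {set T}}) : bool :=
  [&& set0 \in O, setT \in O &
      [forall U in O, forall V in O, (U :|: V \in O) && (U :&: V \in O)]].

Definition T0_space (O : {set {set T}}) : Prop :=
  forall x y : T, x != y -> exists U, U \in O /\ (x \in U) != (y \in U).

Definition minopen (O : {set {set T}}) (x : T) : {set T} :=
  \bigcap_(U in O | x \in U) U.

Definition fle (O : {set {set T}}) (x y : T) : bool :=
  minopen O x \subset minopen O y.

Definition YM (O : {set {set T}}) (A : {set T}) : 'M[int]_#|A| :=
  \matrix_(i, j) (if fle O (enum_val i) (enum_val j) then 0 else 1).

Definition pY (O : {set {set T}}) (A : {set T}) : {poly int} :=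
  \det (map_mx polyC (YM O A) - 'X%:M).

End FiniteSpaces.

(* Main.v *)
Require Import Defs.
From mathcomp Require Import all_boot all_order all_algebra.
From mathcomp Require Import fingroup perm.
Import GRing.Theory.
Local Open Scope ring_scope.

Lemma det_reindex (R : comNzRingType) (k k' : nat) (C : 'M[R]_k) (D : 'M[R]_k')
  (e : k = k') (f : 'I_k -> 'I_k') :
  injective f -> (forall i j, C i j = D (f i) (f j)) -> \det C = \det D.
Proof.
subst k'=> finj HC.
pose s : 'S_k := perm finj.
have -> : C = row_perm s (col_perm s D).
  by apply/matrixP=> i j; rewrite !mxE !permE HC.
rewrite row_permE col_permE !det_mulmx !det_perm odd_permV.
by rewrite mulrCA -signr_addb addbb expr0 mulr1.
Qed.

Theorem mainTheorem15 (T : finType) (O : {set {set T}}) :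
  is_topology O -> T0_space O -> (1 < #|T|)%N ->
  forall x : T,
    ((forall y : T, fle O y x) \/ (forall y : T, fle O x y)) ->
    pY O [set: T] = - 'X * pY O ([set: T] :\ x).
Proof.
move=> _ _ hT x hx.
set A := [set: T]; set B := A :\ x.
have xA : x \in A by rewrite inE.
pose i0 : 'I_#|A| := enum_rank_in xA x.
have ei0 : enum_val i0 = x by rewrite enum_rankK_in.
have hcard : #|A| = #|B|.+1 by rewrite /B (cardsD1 x A) xA.
have [y yB] : exists y, y \in B.
  apply/set0Pn; rewrite -card_gt0 -ltnS -hcard /A cardsT; exact: hT.
pose CA := map_mx polyC (YM O A) - 'X%:M.
have CAE : forall i j, CA i j = (if fle O (enum_val i) (enum_val j) then 0 else 1)%:P - 'X *+ (i == j).
  by move=> i j; rewrite !mxE.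
have key : \det CA = - 'X * \det (row' i0 (col' i0 CA)).
  have cof : cofactor CA i0 i0 = \det (row' i0 (col' i0 CA)).
    by rewrite /cofactor -signr_odd addnn odd_double expr0 mul1r.
  case: hx => hx.
  - rewrite (expand_det_col _ i0) (bigD1 i0) //= big1 ?addr0.
      by rewrite cof CAE ei0 (hx x) eqxx sub0r.
    move=> i /negPf hi; rewrite CAE ei0 hx hi /=.
    by rewrite mulr0n subr0 mul0r.
  - rewrite (expand_det_row _ i0) (bigD1 i0) //= big1 ?addr0.
      by rewrite cof CAE ei0 (hx x) eqxx sub0r.
    move=> j /negPf hj; rewrite CAE ei0 hx eq_sym hj /=.
    by rewrite mulr0n subr0 mul0r.
rewrite /pY -/A -/CA key; congr (_ * _).
pose f : 'I_#|A|.-1 -> 'I_#|B| := fun j => enum_rank_in yB (enum_val (lift i0 j)).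
have inB : forall j, enum_val (lift i0 j) \in B.
  move=> j; rewrite !inE andbT; apply/eqP => h.
  have := neq_lift i0 j; rewrite eq_sym => /eqP; apply.
  by apply: enum_val_inj; rewrite ei0.
have fE : forall j, enum_val (f j) = enum_val (lift i0 j).
  by move=> j; rewrite /f enum_rankK_in.
have finj : injective f.
  move=> a b /(congr1 enum_val); rewrite !fE => /enum_val_inj; exact: lift_inj.
apply: (@det_reindex _ _ _ _ _ _ f); first by rewrite hcard.
  exact: finj.
move=> i j; rewrite !mxE fE fE (inj_eq finj) (inj_eq (@lift_inj _ i0)).
done.
Qed.
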